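(* Let $\alpha\in(0,1/2]$. Then for all integers $n\ge1$ and $a,b\ge0$, $$\sum_{0\le l\le n}\binom nl\alpha^l(1-\alpha)^{n-l}\,\mathbf 1_{\gcd(l+a,n+b)=1}=\sum_{d\mid n+b}\frac{\mu(d)}{d}+O\Big(\frac{\tau(n+b)}{\sqrt n}\Big),$$ where the implied constant depends only on $\alpha$.
   Context: $\mu$ is the Möbius function, $\tau(m)$ the number of positive divisors of $m$, and $\mathbf 1_A$ the indicator of the condition $A$. *)

(* Defs.v *)
From mathcomp Require Import all_boot all_order all_algebra.
From mathcomp Require Import reals.
Set Implicit Arguments. Unset Strict Implicit. Unset Printing Implicit Defensive.
Import Order.TTheory GRing.Theory Num.Theory.

(* Möbius function: mu 0 = 0 (convention, unused); for n >= 1,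
   mu n = (-1)^(number of prime factors) if n is squarefree, else 0. *)
Definition squarefree (n : nat) : bool :=
  all (fun p => logn p n <= 1) (primes n).

Definition moebius (n : nat) : int :=
  if n == 0 then 0%R
  else if squarefree n then ((-1) ^+ size (primes n))%R else 0%R.

Definition tau (m : nat) : nat := size (divisors m).

(* Main.v *)
Require Import Defs.
From mathcomp Require Import all_boot all_order all_algebra.
From mathcomp Require Import reals.
From mathcomp Require Import ring lra zify.
Import Order.TTheory GRing.Theory Num.Theory.
Local Open Scope ring_scope.

Lemma mu1 : moebius 1 = 1.
Proof. by rewrite /moebius /squarefree /=. Qed.

Lemma sqf_mul p e : prime p -> (0 < e)%N -> ~~ (p %| e)%N ->
  squarefree (p * e) = squarefree e.
Proof.
move=> pp e0 npe; have p0 := prime_gt0 pp.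
rewrite /squarefree.
have -> : all (fun q => logn q (p * e) <= 1)%N (primes (p * e)) =
          all (fun q => logn q (p * e) <= 1)%N (p :: primes e).
  by apply: eq_all_r => q; rewrite primesM // primes_prime // inE.
rewrite /= lognM // logn_prime // eqxx (logn_coprime) ?prime_coprime //=.
apply: eq_in_all => q; rewrite mem_primes => /and3P[qp _ qe].
rewrite lognM // logn_prime //.
case: eqP => // eqp; by rewrite -eqp qe in npe.
Qed.

Lemma mu_mul p e : prime p -> (0 < e)%N -> ~~ (p %| e)%N ->
  moebius (p * e) = - moebius e.
Proof.
move=> pp e0 npe; have p0 := prime_gt0 pp.
rewrite /moebius muln_eq0 (negbTE (lt0n_neq0 p0)) (negbTE (lt0n_neq0 e0)) /=.
rewrite sqf_mul //; case: squarefree; last by rewrite oppr0.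
have -> : size (primes (p * e)) = (size (primes e)).+1.
  rewrite -[RHS]/(size (p :: primes e)); apply: perm_size.
  apply: uniq_perm; first exact: primes_uniq.
    by rewrite /= primes_uniq mem_primes pp e0 npe.
  by move=> q; rewrite primesM // primes_prime // inE.
by rewrite exprS mulN1r.
Qed.

Lemma mu_zero p e : prime p -> (p %| e)%N ->
  moebius (p * e) = 0.
Proof.
move=> pp pe; case: (posnP e) => [->|e0]; first by rewrite muln0. have p0 := prime_gt0 pp.
rewrite /moebius muln_eq0 (negbTE (lt0n_neq0 p0)) (negbTE (lt0n_neq0 e0)) /=.
suff -> : squarefree (p * e) = false by [].
apply/negbTE/negP => /allP /(_ p).
rewrite mem_primes pp muln_gt0 p0 e0 dvdn_mulr // => /(_ isT).
rewrite lognM // logn_prime // eqxx.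
have : (0 < logn p e)%N by rewrite logn_gt0 mem_primes pp e0 pe.
by case: (logn p e).
Qed.

Lemma mu_sum g : (0 < g)%N -> \sum_(d <- divisors g) moebius d = (g == 1)%:R.
Proof.
move=> g0; case: (ltngtP g 1) => [|g1|->]; first by rewrite ltnS leqn0 => /eqP g00; rewrite g00 in g0.
  2: by rewrite /= big_seq1 mu1.
have pp := pdiv_prime g1; set p := pdiv g in pp *.
have pg : (p %| g)%N := pdiv_dvd g.
have p0 := prime_gt0 pp.
have gp0 : (0 < g %/ p)%N by rewrite divn_gt0 // dvdn_leq.
have injp : injective (muln p).
  by move=> x y /eqP; rewrite eqn_pmul2l // => /eqP.
rewrite (bigID (fun d => p %| d)%N) /=.
have -> : \sum_(d <- divisors g | (p %| d)%N) moebius d =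
          \sum_(e <- divisors (g %/ p)) moebius (p * e).
  rewrite -big_filter -(big_map (muln p) xpredT).
  apply: perm_big; apply: uniq_perm.
  - by rewrite filter_uniq // divisors_uniq.
  - by rewrite map_inj_uniq // divisors_uniq.
  move=> d; rewrite mem_filter; case: (boolP (p %| d)%N) => /= pd.
    have [k ->] := dvdnP pd; have [h gh] := dvdnP pg.
    rewrite [(k * p)%N]mulnC mem_map // -!dvdn_divisors // gh mulnK // [(h * p)%N]mulnC dvdn_pmul2l //.
  apply/esym/negP => /mapP [e _ de]; by rewrite de dvdn_mulr in pd.
have -> : \sum_(d <- divisors g | ~~ (p %| d)%N) moebius d =
          \sum_(e <- divisors (g %/ p) | ~~ (p %| e)%N) moebius e.
  rewrite -big_filter -[RHS]big_filter.
  apply: perm_big; apply: uniq_perm; try by rewrite filter_uniq // divisors_uniq.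
  move=> d; rewrite !mem_filter; case: (boolP (p %| d)%N) => //= pd.
  have [h gh] := dvdnP pg.
  rewrite -!dvdn_divisors // gh mulnK // Gauss_dvdl //.
  by rewrite coprime_sym prime_coprime.
rewrite (bigID (fun d => p %| d)%N) /= big1; last first.
  by move=> e pe; apply: mu_zero.
rewrite add0r -big_split /= big_seq_cond big1 //.
move=> e /andP[]; rewrite -dvdn_divisors // => /(dvdn_gt0 gp0) e0 pe.
by rewrite mu_mul // addNr.
Qed.

Lemma coprime_mu (R : realType) x N : (0 < N)%N ->
  (coprime x N)%:R = \sum_(d <- divisors N) (moebius d)%:~R * (d %| x)%:R :> R.
Proof.
move=> N0.
have -> : \sum_(d <- divisors N) (moebius d)%:~R * (d %| x)%:R =
          \sum_(d <- divisors N | (d %| x)%N) (moebius d)%:~R :> R.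
  by rewrite [RHS]big_mkcond /=; apply: eq_bigr => d _; case: (d %| x)%N; rewrite ?mulr1 ?mulr0.
rewrite -big_filter (perm_big (divisors (gcdn x N))); last first.
  apply: uniq_perm; first by rewrite filter_uniq // divisors_uniq.
    exact: divisors_uniq.
  by move=> d; rewrite mem_filter -!dvdn_divisors ?gcdn_gt0 ?N0 ?orbT // dvdn_gcd.
rewrite -rmorph_sum /= mu_sum ?gcdn_gt0 ?N0 ?orbT //.
by rewrite /coprime; case: eqP.
Qed.

Definition bp (R : realType) (a : R) n l := 'C(n, l)%:R * a ^+ l * (1 - a) ^+ (n - l).
Arguments bp {R}.

Lemma bp_ge0 (R : realType) (a : R) n l : 0 <= a <= 1 -> 0 <= bp a n l.
Proof.
move=> /andP[a0 a1]; rewrite /bp.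
by rewrite !mulr_ge0 // exprn_ge0 // subr_ge0.
Qed.

Lemma bp_small (R : realType) (a : R) n l : (n < l)%N -> bp a n l = 0.
Proof. by move=> h; rewrite /bp bin_small // !mul0r. Qed.

Lemma bp_sum (R : realType) (a : R) n : \sum_(l < n.+1) bp a n l = 1.
Proof.
have := exprDn (1 - a) a n; rewrite subrK expr1n => ->.
apply: eq_bigr => i _; rewrite /bp.
by rewrite -mulr_natl; ring.
Qed.

Lemma bp_rec (R : realType) (a : R) n m :
  bp a n m.+1 * (m.+1)%:R * (1 - a) = bp a n m * (n - m)%:R * a.
Proof.
rewrite /bp; case: (ltnP m n) => mn.
  have -> : (n - m = (n - m.+1).+1)%N by rewrite subnSK.
  have e := mul_bin_left n m; rewrite -subnSK // in e.
  rewrite !exprS.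
  transitivity ((m.+1 * 'C(n, m.+1))%N%:R * a ^+ m * (1 - a) ^+ (n - m.+1) * a * (1 - a)).
    by rewrite natrM; ring.
  rewrite e natrM; ring.
rewrite bin_small ?ltnS // (_ : (n - m)%N = 0%N); last by apply/eqP; rewrite subn_eq0.
by rewrite !mul0r mulr0 !mul0r.
Qed.

Arguments bp_ge0 {R}. Arguments bp_small {R}. Arguments bp_sum {R}. Arguments bp_rec {R}.

Lemma cnt_div (R : realType) d y : (0 < d)%N ->
  \sum_(0 <= i < d) (d %| y + i)%:R = 1 :> R.
Proof.
move=> d0; elim: y => [|y IH].
  case: d d0 => // d _; rewrite big_nat_recl //= big1_seq ?addr0 //.
  move=> i /andP[_]; rewrite mem_index_iota => /andP[_ id].
  case: (boolP (d.+1 %| 0 + i.+1)%N) => // /dvdn_leq; rewrite add0n => /(_ isT).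
  by rewrite leqNgt ltnS id.
rewrite -[RHS]IH.
have e1 : \sum_(0 <= i < d) (d %| y.+1 + i)%:R = \sum_(0 <= i < d) (d %| y + i.+1)%:R :> R.
  by apply: eq_bigr => i _; rewrite addSnnS.
rewrite e1; case: d d0 {e1 IH} => // d _.
rewrite big_nat_recr // [RHS]big_nat_recl //= addn0.
have -> : (d.+1 %| y + d.+1)%N = (d.+1 %| y)%N by rewrite dvdn_addl.
by rewrite addrC.
Qed.

Lemma cnt_div_le (R : realType) d y j : (0 < d)%N -> (j <= d)%N ->
  \sum_(0 <= i < j) (d %| y + i)%:R <= 1 :> R.
Proof.
move=> d0 jd; rewrite -[X in _ <= X](cnt_div R d y d0).
rewrite (big_cat_nat (leq0n j) jd) /=.
by rewrite lerDl sumr_ge0.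
Qed.

Definition Qd (R : realType) (a : R) n m :=
  (if m is k.+1 then bp a n k else 0) - bp a n m.
Arguments Qd {R}.
Definition Tr (R : realType) (a : R) n d r :=
  \sum_(0 <= l < n.+1) bp a n l * (d %| l + r)%:R.
Arguments Tr {R}.
Definition Vr (R : realType) (a : R) n := \sum_(0 <= m < n.+2) `|Qd a n m|.
Arguments Vr {R}.

Lemma T_step (R : realType) (a : R) n d r :
  Tr a n d r.+1 - Tr a n d r = \sum_(0 <= m < n.+2) Qd a n m * (d %| m + r)%:R.
Proof.
rewrite /Qd; under eq_bigr do rewrite mulrBl.
rewrite sumrB big_nat_recl // [X in _ = _ - X]big_nat_recr //= mul0r add0r.
rewrite bp_small // mul0r addr0 /Tr; congr (_ - _).
by apply: eq_bigr => i _; rewrite addSnnS.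
Qed.

Lemma T_diff (R : realType) (a : R) n d r j : (0 < d)%N -> (j <= d)%N ->
  `|Tr a n d (r + j) - Tr a n d r| <= Vr a n.
Proof.
move=> d0 jd.
have -> : Tr a n d (r + j) - Tr a n d r =
    \sum_(0 <= i < j) (Tr a n d (r + i).+1 - Tr a n d (r + i)).
  have h := @telescope_sumr _ 0 j (fun i => Tr a n d (r + i)) (leq0n j).
  rewrite /= addn0 in h; rewrite -h.
  by apply: eq_bigr => i _; rewrite addnS.
under eq_bigr do rewrite T_step.
rewrite exchange_big /=.
apply: (le_trans (ler_norm_sum _ _ _)); rewrite /Vr; apply: ler_sum => m _.
rewrite -mulr_sumr normrM ler_piMr //.
rewrite ger0_norm ?sumr_ge0 //.
under eq_bigr do rewrite addnA.
exact: cnt_div_le.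
Qed.

Lemma T_avg (R : realType) (a : R) n d r : (0 < d)%N ->
  \sum_(0 <= j < d) Tr a n d (r + j) = 1.
Proof.
move=> d0; rewrite /Tr exchange_big /=.
rewrite -[RHS](bp_sum a n) big_mkord; apply: eq_bigr => l _.
rewrite -mulr_sumr.
under eq_bigr do rewrite addnA.
by rewrite cnt_div // mulr1.
Qed.

Lemma T_close (R : realType) (a : R) n d r : (0 < d)%N ->
  `|Tr a n d r - d%:R^-1| <= Vr a n.
Proof.
move=> d0.
have dR : (d%:R : R) != 0 by rewrite pnatr_eq0 -lt0n.
have -> : Tr a n d r - d%:R^-1 =
    d%:R^-1 * \sum_(0 <= j < d) (Tr a n d r - Tr a n d (r + j)).
  rewrite sumrB T_avg // sumr_const_nat subn0.
  by rewrite -mulr_natr; field.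
rewrite normrM ger0_norm ?invr_ge0 ?ler0n //.
rewrite ler_pdivrMl ?ltr0n //.
apply: (le_trans (ler_norm_sum _ _ _)).
apply: (@le_trans _ _ (\sum_(0 <= j < d) Vr a n)).
  apply: ler_sum_nat => j /andP[_ jd].
  by rewrite distrC; apply: T_diff => //; apply: ltnW.
by rewrite sumr_const_nat subn0 mulr_natl.
Qed.




Lemma bp_up (R : realType) (a : R) n m : 0 < a < 1 ->
  (m.+1)%:R <= (n.+1)%:R * a -> bp a n m <= bp a n m.+1.
Proof.
move=> /andP[a0 a1] h.
have mn : (m < n)%N.
  have : (m.+1)%:R < (n.+1)%:R :> R.
    by apply: (le_lt_trans h); rewrite gtr_pMr // ltr0n.
  by rewrite ltr_nat ltnS.
have := bp_rec a n m; rewrite natrB; last exact: ltnW.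
have a01 : 0 <= a <= 1 by apply/andP; split; apply: ltW.
have := bp_ge0 a n m a01.
rewrite -!natr1 in h *.
move: (bp a n m) (bp a n m.+1) => X Y X0 e.
have c0 : 0 < (m%:R + 1) * (1 - a).
  by rewrite mulr_gt0 // ?subr_gt0 // ltr_wpDl.
have hd : (m%:R + 1) * (1 - a) <= (n%:R - m%:R) * a.
  rewrite -subr_ge0.
  have -> : (n%:R - m%:R) * a - (m%:R + 1) * (1 - a) = (n%:R + 1) * a - (m%:R + 1) :> R by ring.
  by rewrite subr_ge0.
rewrite -(ler_pM2r c0) [Y * _]mulrA e -mulrA; exact: ler_wpM2l.
Qed.
Lemma bp_down (R : realType) (a : R) n m : 0 < a < 1 ->
  (n.+1)%:R * a <= (m.+1)%:R -> bp a n m.+1 <= bp a n m.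
Proof.
move=> /andP[a0 a1] h.
case: (ltnP m n) => mn; last first.
  by rewrite bp_small ?ltnS // bp_ge0 //; apply/andP; split; apply: ltW.
have := bp_rec a n m; rewrite natrB; last exact: ltnW.
have a01 : 0 <= a <= 1 by apply/andP; split; apply: ltW.
have := bp_ge0 a n m a01.
rewrite -!natr1 in h *.
move: (bp a n m) (bp a n m.+1) => X Y X0 e.
have c0 : 0 < (m%:R + 1) * (1 - a).
  by rewrite mulr_gt0 // ?subr_gt0 // ltr_wpDl.
have hd : (n%:R - m%:R) * a <= (m%:R + 1) * (1 - a).
  rewrite -subr_ge0.
  have -> : (m%:R + 1) * (1 - a) - (n%:R - m%:R) * a = (m%:R + 1) - (n%:R + 1) * a :> R by ring.
  by rewrite subr_ge0.
rewrite -(ler_pM2r c0) [Y * _]mulrA e -mulrA; exact: ler_wpM2l.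
Qed.

Lemma Vr_mode (R : realType) (a : R) n : 0 < a < 1 ->
  Vr a n = 2 * bp a n (Num.truncn ((n.+1)%:R * a)).
Proof.
move=> ha; have /andP[a0 a1] := ha.
set k := Num.truncn _.
have x0 : 0 <= (n.+1)%:R * a by rewrite mulr_ge0 // ltW.
have /andP[kl ku] := truncn_itv x0; rewrite -/k in kl ku.
have kn : (k <= n.+1)%N.
  rewrite ltnW // truncn_lt_nat //; apply: (lt_le_trans (_ : _ < (n.+1)%:R)) => //.
  by rewrite gtr_pMr // ltr0n.
rewrite /Vr big_nat_recl // /Qd sub0r normrN ger0_norm; last first.
  by apply: bp_ge0; apply/andP; split; apply: ltW.
rewrite (big_cat_nat (leq0n k) kn) /=.
have -> : \sum_(0 <= i < k) `|bp a n i - bp a n i.+1| = \sum_(0 <= i < k) (bp a n i.+1 - bp a n i).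
  apply: eq_big_nat => i /andP[_ ik]; rewrite distrC ger0_norm // subr_ge0.
  apply: bp_up => //; apply: le_trans kl; by rewrite ler_nat.
have -> : \sum_(k <= i < n.+1) `|bp a n i - bp a n i.+1| = - \sum_(k <= i < n.+1) (bp a n i.+1 - bp a n i).
  rewrite -sumrN; apply: eq_big_nat => i /andP[ki _]; rewrite opprB ger0_norm // subr_ge0.
  apply: bp_down => //; apply: (le_trans (ltW ku)); by rewrite ler_nat.
rewrite !telescope_sumr // (bp_small a n n.+1 (ltnSn n)); ring.
Qed.




Lemma bp_partial (R : realType) (a : R) n M : 0 <= a <= 1 ->
  \sum_(0 <= l < M) bp a n l <= 1.
Proof.
move=> a01.
have E : \sum_(0 <= l < M + n.+1) bp a n l = 1.
  rewrite (big_cat_nat (leq0n n.+1)) /=; last by rewrite leq_addl.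
  rewrite [X in _ + X]big1_seq ?addr0; first by rewrite big_mkord bp_sum.
  move=> l /andP[_]; rewrite mem_index_iota => /andP[nl _]; exact: bp_small.
rewrite -[X in _ <= X]E.
rewrite [X in _ <= X](big_cat_nat (leq0n M) (leq_addr _ _)) /=.
by rewrite lerDl sumr_ge0 // => i _; apply: bp_ge0.
Qed.

Lemma natrB_ge (R : realType) (n x : nat) : n%:R - x%:R <= (n - x)%:R :> R.
Proof.
case: (leqP x n) => h; first by rewrite natrB.
rewrite (_ : (n - x)%N = 0%N); last by apply/eqP; rewrite subn_eq0 ltnW.
by rewrite subr_le0 ler_nat ltnW.
Qed.

Lemma bp_max (R : realType) (a : R) n k : 0 < a < 1 -> k%:R <= (n.+1)%:R * a ->
  bp a n k ^+ 2 * (n%:R * (a * (1 - a))) <= 8.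
Proof.
move=> ha hk; have /andP[a0 a1] := ha.
have a01 : 0 <= a <= 1 by apply/andP; split; apply: ltW.
have a1' : 0 < 1 - a by rewrite subr_gt0.
set A := (n.+1)%:R * a * (1 - a).
have A0 : 0 < A by rewrite /A !mulr_gt0 // ltr0n.
set s := Num.sqrt (A / 2).
have s0 : 0 <= s by apply: sqrtr_ge0.
have ss : s ^+ 2 = A / 2 by rewrite sqr_sqrtr // divr_ge0 // ltW.
set t := Num.truncn s.
have /andP[tl tu] := truncn_itv s0; rewrite -/t in tl tu.
have t0 : 0 <= t%:R :> R by apply: ler0n.
have tt : t%:R ^+ 2 <= A / 2 by rewrite -ss !expr2; apply: ler_pM.
have tt2 : t%:R <= t%:R ^+ 2 :> R.
  case: (posnP t) => [->|tp]; first by rewrite expr2 mul0r.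
  by rewrite expr2 ler_peMl // ler1n.
have tA : t%:R <= A by lra.
set c := 1 - t%:R / A.
have c0 : 0 <= c by rewrite /c subr_ge0 ler_pdivrMr // mul1r.
have X0 : forall l, 0 <= bp a n l by move=> l; apply: bp_ge0.
have step : forall i, (i < t)%N -> c * bp a n (k + i) <= bp a n (k + i).+1.
  move=> i it; set x := (k + i)%N.
  have hx : x%:R + 1 <= (n.+1)%:R * a + t%:R.
    have : (x.+1 <= k + t)%N by rewrite /x -addnS leq_add2l.
    rewrite -(ler_nat R) natrD -natr1 => h; apply: (le_trans h); by rewrite lerD2r.
  have e := bp_rec a n x.
  set X := bp a n x in e *; set Y := bp a n x.+1 in e *.
  have Y0 : 0 <= Y by apply: X0.
  have XX0 : 0 <= X by apply: X0.
  set B := A + t%:R * (1 - a).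
  have B0 : 0 < B.
    have : 0 <= t%:R * (1 - a) by rewrite mulr_ge0 // ltW.
    rewrite /B; lra.
  have h1 : (x.+1)%:R * (1 - a) <= B.
    have -> : B = ((n.+1)%:R * a + t%:R) * (1 - a) by rewrite /B /A; ring.
    by rewrite ler_wpM2r ?(ltW a1') // -natr1.
  have h2 : A - t%:R * a <= (n - x)%:R * a.
    have -> : A - t%:R * a = ((n.+1)%:R - (n.+1)%:R * a - t%:R) * a by rewrite /A; ring.
    rewrite ler_wpM2r ?(ltW a0) //; apply: le_trans (natrB_ge R n x).
    rewrite -natr1 in hx *; lra.
  have h3 : X * (A - t%:R * a) <= Y * B.
    apply: (le_trans (ler_wpM2l XX0 h2)); rewrite mulrA -e -mulrA.
    exact: ler_wpM2l.
  have h4 : c * B <= A - t%:R * a.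
    rewrite -subr_ge0.
    have -> : A - t%:R * a - c * B = t%:R ^+ 2 * (1 - a) / A.
      by rewrite /c /B; field; rewrite gt_eqF.
    by rewrite divr_ge0 ?(ltW A0) // mulr_ge0 ?sqr_ge0 ?(ltW a1').
  rewrite -(ler_pM2r B0); apply: le_trans h3.
  by rewrite [c * X]mulrC -mulrA; apply: ler_wpM2l.
have ind : forall i, (i <= t)%N -> (1 - i%:R * t%:R / A) * bp a n k <= bp a n (k + i).
  elim=> [|i IH] it; first by rewrite addn0 !mul0r subr0 mul1r.
  rewrite addnS; apply: (le_trans _ (step i it)).
  apply: (@le_trans _ _ (c * ((1 - i%:R * t%:R / A) * bp a n k))); last first.
    by rewrite ler_wpM2l // IH // ltnW.
  rewrite mulrA ler_wpM2r //.
  rewrite -subr_ge0.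
  have -> : c * (1 - i%:R * t%:R / A) - (1 - i.+1%:R * t%:R / A) = i%:R * t%:R ^+ 2 / A ^+ 2.
    by rewrite /c -natr1; field; rewrite gt_eqF.
  by rewrite divr_ge0 ?sqr_ge0 // mulr_ge0 ?sqr_ge0.
have half : forall i, (i <= t)%N -> bp a n k / 2 <= bp a n (k + i).
  move=> i it; apply: (le_trans _ (ind i it)).
  have h : i%:R * t%:R <= A / 2.
    apply: le_trans tt; rewrite expr2 ler_wpM2r // ler_nat //.
  have h' : i%:R * t%:R / A <= 1 / 2.
    rewrite ler_pdivrMr //; lra.
  move: (bp a n k) (X0 k) (i%:R * t%:R / A) h' => P P0 z hz.
  have : 0 <= (1 - z - 1/2) * P by apply: mulr_ge0 => //; lra.
  lra.
have hsum : (t.+1)%:R * (bp a n k / 2) <= 1.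
  apply: (@le_trans _ _ (\sum_(0 <= i < t.+1) bp a n (k + i))).
    rewrite -[X in X <= _](_ : \sum_(0 <= i < t.+1) (bp a n k / 2) = _); last by rewrite sumr_const_nat subn0 mulr_natl.
    apply: ler_sum_nat => i /andP[_ it].
    by apply: half.
  have := big_addn 0 (t.+1 + k) k xpredT (bp a n); rewrite add0n addnK => E.
  under eq_bigr do rewrite addnC; rewrite -E.
  apply: (le_trans _ (bp_partial _ a n (t.+1 + k) a01)).
  rewrite [X in _ <= X](big_cat_nat (leq0n k) (leq_addl _ _)) /=.
  by rewrite lerDr sumr_ge0.
have u : bp a n k * (t.+1)%:R <= 2 by move: hsum; move: (bp a n k) => P; lra.
have s2 : A / 2 <= (t.+1)%:R ^+ 2 by rewrite -ss !expr2; apply: ler_pM => //; apply: ltW.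
have nA : n%:R * (a * (1 - a)) <= A.
  rewrite /A -natr1 mulrA -subr_ge0.
  have -> : (n%:R + 1) * a * (1 - a) - n%:R * a * (1 - a) = a * (1 - a) by ring.
  by rewrite mulr_ge0 // ltW.
have P0 : 0 <= bp a n k * (t.+1)%:R by rewrite mulr_ge0.
have P2 : (bp a n k * (t.+1)%:R) ^+ 2 <= 4.
  rewrite expr2 (_ : 4 = 2 * 2) //; last by rewrite -natrM.
  by apply: ler_pM.
apply: (@le_trans _ _ (bp a n k ^+ 2 * A)); first by rewrite ler_wpM2l // sqr_ge0.
apply: (@le_trans _ _ (bp a n k ^+ 2 * (2 * (t.+1)%:R ^+ 2))).
  by rewrite ler_wpM2l ?sqr_ge0 //; lra.
rewrite mulrCA -exprMn; lra.
Qed.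




Lemma mu_norm (R : realType) d : `|(moebius d)%:~R : R| <= 1.
Proof.
rewrite /moebius; case: (d == 0%N); first by rewrite normr0.
case: squarefree; last by rewrite normr0.
by rewrite rmorphXn /= rmorphN1 normrX normrN1 expr1n.
Qed.

Lemma sum_const_seq (R : realType) (s : seq nat) (c : R) :
  \sum_(d <- s) c = (size s)%:R * c.
Proof.
elim: s => [|x s IH]; first by rewrite big_nil mul0r.
by rewrite big_cons IH /= -natr1 mulrDl mul1r addrC.
Qed.

Theorem lemma2 (R : realType) (alpha : R) (halpha : 0 < alpha <= 1 / 2) :
  exists C : R, 0 < C /\
    forall n a b : nat, (1 <= n)%N ->
      `| \sum_(l < n.+1)
            'C(n, l)%:R * alpha ^+ l * (1 - alpha) ^+ (n - l)
              * (coprime (l + a) (n + b))%:R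
         - \sum_(d <- divisors (n + b)) (moebius d)%:~R / d%:R |
      <= C * ((tau (n + b))%:R / Num.sqrt n%:R).
Proof.
have /andP[a0 ah] := halpha.
have a1 : alpha < 1 by lra.
have ha : 0 < alpha < 1 by rewrite a0 a1.
have b0 : 0 < alpha * (1 - alpha) by rewrite mulr_gt0 // subr_gt0.
set D := 32 / (alpha * (1 - alpha)).
have D0 : 0 < D by rewrite divr_gt0.
exists (D + 1); split; first by lra.
move=> n a b n1.
set N := (n + b)%N.
have N0 : (0 < N)%N by rewrite /N addn_gt0 n1.
have sn0 : 0 < Num.sqrt (n%:R : R) by rewrite sqrtr_gt0 ltr0n.
have E : \sum_(l < n.+1) 'C(n, l)%:R * alpha ^+ l * (1 - alpha) ^+ (n - l)
              * (coprime (l + a) N)%:R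
       = \sum_(d <- divisors N) (moebius d)%:~R * Tr alpha n d a.
  under eq_bigr do rewrite (coprime_mu R _ _ N0) mulr_sumr.
  rewrite exchange_big /=; apply: eq_bigr => d _.
  rewrite /Tr big_mkord mulr_sumr; apply: eq_bigr => l _.
  by rewrite /bp mulrCA.
rewrite E -sumrB.
have V0 : 0 <= Vr alpha n by rewrite /Vr sumr_ge0.
apply: (@le_trans _ _ ((tau N)%:R * Vr alpha n)).
  apply: (le_trans (ler_norm_sum _ _ _)).
  rewrite /tau -sum_const_seq big_seq [X in _ <= X]big_seq.
  apply: ler_sum => d; rewrite -dvdn_divisors // => /(dvdn_gt0 N0) d0.
  rewrite -mulrBr normrM -[X in _ <= X]mul1r.
  apply: ler_pM => //; [exact: mu_norm| exact: T_close].
rewrite mulrCA ler_wpM2l // ler_pdivlMr //.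
set k := Num.truncn ((n.+1)%:R * alpha).
have hk : k%:R <= (n.+1)%:R * alpha by rewrite truncn_le mulr_ge0 // ltW.
have bm := bp_max _ _ _ _ ha hk.
rewrite Vr_mode //= -/k.
have P0 : 0 <= bp alpha n k by apply: bp_ge0; rewrite !ltW.
have Q0 : 0 <= 2 * bp alpha n k * Num.sqrt n%:R.
  by apply: mulr_ge0; [apply: mulr_ge0|apply: ltW].
rewrite -(ler_pXn2r (_ : (0 < 2)%N)) ?nnegrE //; last by lra.
rewrite exprMn sqr_sqrtr ?ler0n //.
have : (2 * bp alpha n k) ^+ 2 * n%:R <= D.
  rewrite /D ler_pdivlMr // exprMn -mulrA.
  have -> : (2 ^+ 2 : R) = 4 by rewrite expr2 -natrM.
  rewrite (_ : (32 : R) = 4 * 8) ?ler_wpM2l //; last by rewrite -natrM.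
  by rewrite -mulrA ler_wpM2l.
move=> h; apply: (le_trans h).
have : 1 <= D + 1 by lra.
move=> h1.
have : D + 1 <= (D + 1) ^+ 2 by rewrite expr2 ler_peMl //; lra.
lra.
Qed.
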